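(* Let $m$ be an odd positive integer, let $r,s\in\mathbb{Z}$ with $2^{-1}+r^2+s^2\equiv0\pmod m$, and let $\tau:H_{1,2,2}/mH_{1,2,2}\to M_2(\mathbb{Z}/m\mathbb{Z})$ be the map defined as follows: writing $\mathbf{q}\equiv q_1+q_2\mathbf{i}+q_3\sqrt2\,\mathbf{j}+q_4\sqrt2\,\mathbf{k}\pmod{mH_{1,2,2}}$ with $q_i\in\mathbb{Z}$, $\tau(\mathbf{q})=\begin{pmatrix}q_1-2rq_3-2sq_4 & q_2-2sq_3+2rq_4\\ -q_2-2sq_3+2rq_4 & q_1+2rq_3+2sq_4\end{pmatrix}$ modulo $m$. Then $\mathbf{q}\in H_{1,2,2}$ is primitive to $m$ if and only if the matrix $\tau(\mathbf{q})$ is primitive to $m$.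
   Context: Let $\mathbf{i},\mathbf{j},\mathbf{k}$ be the standard quaternion units. $H_{1,2,2}$ is the subring of the quaternions equal to the $\mathbb{Z}$-module generated by $\mathbf{v}_1=1$, $\mathbf{v}_2=\mathbf{i}$, $\mathbf{v}_3=\tfrac12(1+\mathbf{i}+\sqrt2\,\mathbf{j})$, $\mathbf{v}_4=\tfrac12(1+\mathbf{i}+\sqrt2\,\mathbf{k})$. An element $\mathbf{g}=g_1\mathbf{v}_1+g_2\mathbf{v}_2+g_3\mathbf{v}_3+g_4\mathbf{v}_4$ ($g_i\in\mathbb{Z}$) is primitive to $m$ if $\gcd(g_1,g_2,g_3,g_4,m)=1$; this depends only on the class of $\mathbf{g}$ modulo $mH_{1,2,2}$. A matrix $\begin{pmatrix}\alpha&\beta\\\gamma&\delta\end{pmatrix}$ over $\mathbb{Z}/m\mathbb{Z}$ is primitive to $m$ if $\gcd(\alpha,\beta,\gamma,\delta,m)=1$. $2^{-1}$ denotes the inverse of $2$ modulo $m$. *)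

(* Defs.v *)
From HB Require Import structures.
From mathcomp Require Import all_boot all_order all_algebra.
Set Implicit Arguments. Unset Strict Implicit. Unset Printing Implicit Defensive.
Import Order.TTheory GRing.Theory Num.Theory.
Local Open Scope ring_scope.

(* Elements of Q(sqrt 2), represented exactly: (a, b) stands for a + b*sqrt 2. *)
Definition Q2 := (rat * rat)%type.
Definition q2add (x y : Q2) : Q2 := (x.1 + y.1, x.2 + y.2).
Definition q2scale (c : rat) (x : Q2) : Q2 := (c * x.1, c * x.2).
Definition q2zero : Q2 := (0, 0).

(* Quaternions with coefficients in Q(sqrt 2): x0 + x1 i + x2 j + x3 k. *)
Record quat := Quat { qc0 : Q2; qc1 : Q2; qc2 : Q2; qc3 : Q2 }.

Definition qadd (x y : quat) : quat :=
  Quat (q2add (qc0 x) (qc0 y)) (q2add (qc1 x) (qc1 y))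
       (q2add (qc2 x) (qc2 y)) (q2add (qc3 x) (qc3 y)).
Definition qscale (c : rat) (x : quat) : quat :=
  Quat (q2scale c (qc0 x)) (q2scale c (qc1 x)) (q2scale c (qc2 x)) (q2scale c (qc3 x)).
Definition qsub (x y : quat) : quat := qadd x (qscale (-1) y).
Definition qzscale (n : int) (x : quat) : quat := qscale (n%:~R) x.

Definition q_one : quat := Quat (1, 0) q2zero q2zero q2zero.
Definition q_i : quat := Quat q2zero (1, 0) q2zero q2zero.
Definition q_s2j : quat := Quat q2zero q2zero (0, 1) q2zero.
Definition q_s2k : quat := Quat q2zero q2zero q2zero (0, 1).

(* The Z-basis of H_{1,2,2}. *)
Definition v1 : quat := q_one.
Definition v2 : quat := q_i.
Definition v3 : quat := qscale (1 / 2) (qadd (qadd q_one q_i) q_s2j).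
Definition v4 : quat := qscale (1 / 2) (qadd (qadd q_one q_i) q_s2k).

Definition hcomb (g1 g2 g3 g4 : int) : quat :=
  qadd (qadd (qadd (qzscale g1 v1) (qzscale g2 v2)) (qzscale g3 v3)) (qzscale g4 v4).

Definition in_mH (m : nat) (x : quat) : Prop :=
  exists h1 h2 h3 h4 : int, x = qzscale m%:Z (hcomb h1 h2 h3 h4).

Definition qexpr (q1 q2 q3 q4 : int) : quat :=
  qadd (qadd (qadd (qzscale q1 q_one) (qzscale q2 q_i)) (qzscale q3 q_s2j))
       (qzscale q4 q_s2k).

Definition primitive_H (m : nat) (g1 g2 g3 g4 : int) : Prop :=
  gcdz (gcdz (gcdz (gcdz g1 g2) g3) g4) m%:Z = 1.

(* A 2x2 matrix over Z/mZ, given by integer representatives of its entries,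
   is primitive to m iff gcd(alpha,beta,gamma,delta,m) = 1
   (independent of the chosen representatives). *)
Definition primitive_mx (m : nat) (A : 'M[int]_2) : Prop :=
  gcdz (gcdz (gcdz (gcdz (A 0 0) (A 0 1)) (A 1 0)) (A 1 1)) m%:Z = 1.

Definition tau (r s q1 q2 q3 q4 : int) : 'M[int]_2 :=
  \matrix_(a < 2, b < 2)
    if a == 0 then
      (if b == 0 then q1 - 2 * r * q3 - 2 * s * q4 else q2 - 2 * s * q3 + 2 * r * q4)
    else
      (if b == 0 then - q2 - 2 * s * q3 + 2 * r * q4 else q1 + 2 * r * q3 + 2 * s * q4).

(* 2^{-1} modulo an odd m: the integer (m+1)/2 *)
Definition inv2 (m : nat) : int := (m.+1./2)%:Z.

(* Main.v *)
Require Import Defs.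
From HB Require Import structures.
From mathcomp Require Import all_boot all_order all_algebra ring lra zify.
Import Order.TTheory GRing.Theory Num.Theory.
Local Open Scope ring_scope.
Lemma ext (m : nat) (g1 g2 g3 g4 q1 q2 q3 q4 : int) :
    in_mH m (qsub (hcomb g1 g2 g3 g4) (qexpr q1 q2 q3 q4)) -> exists h1 h2 h3 h4 : int,
    [/\ g3 = 2*q3 + m%:Z*h3, g4 = 2*q4 + m%:Z*h4, g1 = q1 - q3 - q4 + m%:Z*h1 & g2 = q2 - q3 - q4 + m%:Z * h2].
Proof.
case=> h1 [h2 [h3 [h4 E]]].
exists h1, h2, h3, h4.
move: E; rewrite /qsub /qadd /qexpr /hcomb /qzscale /qscale /q2add /q2scale /v1 /v2 /v3 /v4 /q_one /q_i /q_s2j /q_s2k /q2zero /=.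
case=> E1 E2 E3 E4 E5 E6 E7 E8.
have H3 : g3 = 2*q3 + m%:Z*h3.
  apply: (@intr_inj rat); rewrite !rmorphD !rmorphM /=. 
  move: E6. set c := ((m%:Z)%:~R : rat). set d := (h3%:~R : rat).
  move=> E6. have : c * d / 2 = (c * d) / 2 by []. set e := c * d / 2. lra. 
have H4 : g4 = 2*q4 + m%:Z*h4.
  apply: (@intr_inj rat); rewrite !rmorphD !rmorphM /=. 
  move: E8. set c := ((m%:Z)%:~R : rat). set d := (h4%:~R : rat).
  move=> E8. lra. 
split => //.
  apply: (@intr_inj rat); rewrite !(rmorphD, rmorphB, rmorphM) /=. 
  move: E1. rewrite H3 H4 !(rmorphD, rmorphM) /=. lra.
  apply: (@intr_inj rat); rewrite !(rmorphD, rmorphB, rmorphM) /=. 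
  move: E3. rewrite H3 H4 !(rmorphD, rmorphM) /=. lra.
Qed.
Definition comb (x1 x2 x3 x4 M y : int) := exists a1 a2 a3 a4 b : int,
  y = a1*x1+a2*x2+a3*x3+a4*x4+b*M.

Lemma comb_trans x1 x2 x3 x4 y1 y2 y3 y4 m z :
  comb x1 x2 x3 x4 m y1 -> comb x1 x2 x3 x4 m y2 -> comb x1 x2 x3 x4 m y3 ->
  comb x1 x2 x3 x4 m y4 -> comb y1 y2 y3 y4 m z -> comb x1 x2 x3 x4 m z.
Proof.
move=> [a1 [a2 [a3 [a4 [b E1]]]]] [c1 [c2 [c3 [c4 [d E2]]]]]
  [e1 [e2 [e3 [e4 [f E3]]]]] [k1 [k2 [k3 [k4 [l E4]]]]] [u1 [u2 [u3 [u4 [v ->]]]]].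
rewrite E1 E2 E3 E4.
exists (u1*a1+u2*c1+u3*e1+u4*k1), (u1*a2+u2*c2+u3*e2+u4*k2),
  (u1*a3+u2*c3+u3*e3+u4*k3), (u1*a4+u2*c4+u3*e4+u4*k4), (u1*b+u2*d+u3*f+u4 * l+v).
ring.
Qed.

Lemma gcd5 a b c d m : gcdz (gcdz (gcdz (gcdz a b) c) d) m = 1 <-> comb a b c d m 1.
Proof.
split.
  move=> H.
  have [u1 [v1 e1]] := Bezoutz a b.
  have [u2 [v2 e2]] := Bezoutz (gcdz a b) c.
  have [u3 [v3 e3]] := Bezoutz (gcdz (gcdz a b) c) d.
  have [u4 [v4 e4]] := Bezoutz (gcdz (gcdz (gcdz a b) c) d) m.
  exists (u4*u3*u2*u1), (u4*u3*u2*v1), (u4*u3*v2), (u4*v3), v4.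
  rewrite -H -e4 -e3 -e2 -e1; ring.
move=> [u1 [u2 [u3 [u4 [v E]]]]].
set G := gcdz _ m.
have hm : (G %| m)%Z by apply: dvdz_gcdr.
have h4 : (G %| d)%Z by apply: dvdz_trans (dvdz_gcdl _ _) (dvdz_gcdr _ _).
have h3 : (G %| c)%Z.
  apply: dvdz_trans (dvdz_gcdl _ _) _; apply: dvdz_trans (dvdz_gcdl _ _) (dvdz_gcdr _ _).
have h2 : (G %| b)%Z.
  apply: dvdz_trans (dvdz_gcdl _ _) _; apply: dvdz_trans (dvdz_gcdl _ _) _.
  apply: dvdz_trans (dvdz_gcdl _ _) (dvdz_gcdr _ _).
have h1 : (G %| a)%Z.
  apply: dvdz_trans (dvdz_gcdl _ _) _; apply: dvdz_trans (dvdz_gcdl _ _) _.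
  apply: dvdz_trans (dvdz_gcdl _ _) (dvdz_gcdl _ _).
have : (G %| u1*a+u2*b+u3*c+u4*d+v * m)%Z by rewrite !rpredD ?dvdz_mull.
by rewrite -E dvdz1 /G /gcdz /= => /eqP ->.
Qed.

Lemma lc (P Q al E : int) : E = 0 -> Q - P = al * E -> P = Q.
Proof. move=> -> /eqP; rewrite mulr0 subr_eq0 => /eqP ->; done. Qed.

Theorem theorem30 (m : nat) (r s : int) :
  odd m -> (0 < m)%N ->
  (inv2 m + r ^+ 2 + s ^+ 2 = 0 %[mod m%:Z])%Z ->
  forall (g1 g2 g3 g4 q1 q2 q3 q4 : int),
    in_mH m (qsub (hcomb g1 g2 g3 g4) (qexpr q1 q2 q3 q4)) ->
    (primitive_H m g1 g2 g3 g4 <-> primitive_mx m (tau r s q1 q2 q3 q4)).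
Proof.
move=> Hodd Hm0 Hmod g1 g2 g3 g4 q1 q2 q3 q4 /ext [h1 [h2 [h3 [h4 [H3 H4 H1 H2]]]]].
set w := inv2 m.
have Hw : 2 * w = m%:Z + 1.
  have := odd_double_half m.+1; rewrite /= Hodd /= /w /inv2 => e. lia.
set k := ((w + r ^+ 2 + s ^+ 2) %/ m%:Z)%Z.
have Hk : w + r ^+ 2 + s ^+ 2 = k * m%:Z.
  by rewrite {1}(divz_eq (w + r ^+ 2 + s ^+ 2) m%:Z) Hmod mod0z addr0.
have HM : m%:Z = 2 * w - 1 by rewrite Hw; ring.
have HE : w + r ^+ 2 + s ^+ 2 - k * (2 * w - 1) = 0 by rewrite -HM Hk subrr.
rewrite /primitive_H /primitive_mx !mxE /= !gcd5.
subst g1 g2 g3 g4.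
have gq : comb (q1 - q3 - q4 + m%:Z * h1) (q2 - q3 - q4 + m%:Z * h2) (2 * q3 + m%:Z * h3) (2 * q4 + m%:Z * h4) m 1
  <-> comb q1 q2 q3 q4 m 1.
  split; apply: comb_trans.
  - by exists (1 : int), (0 : int), ((-1) : int), ((-1) : int), (h1 : int); ring.
  - by exists (0 : int), (1 : int), ((-1) : int), ((-1) : int), (h2 : int); ring.
  - by exists (0 : int), (0 : int), (2 : int), (0 : int), (h3 : int); ring.
  - by exists (0 : int), (0 : int), (0 : int), (2 : int), (h4 : int); ring.
  - by exists (1 : int), (0 : int), (w : int), (w : int), ((-(h1 + q3 + w*h3 + q4 + w*h4)) : int); rewrite HM; ring.
  - by exists (0 : int), (1 : int), (w : int), (w : int), ((-(h2 + q3 + w*h3 + q4 + w*h4)) : int); rewrite HM; ring.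
  - by exists (0 : int), (0 : int), (w : int), (0 : int), ((-q3 - w*h3) : int); rewrite HM; ring.
  - by exists (0 : int), (0 : int), (0 : int), (w : int), ((-q4 - w*h4) : int); rewrite HM; ring.
rewrite gq; split; apply: comb_trans.
- by exists (w : int), (0 : int), (0 : int), (w : int), ((-q1) : int); rewrite HM; ring.
- by exists (0 : int), (w : int), ((-w) : int), (0 : int), ((-q2) : int); rewrite HM; ring.
- exists ((w*r) : int), ((w*s) : int), ((w*s) : int), ((-(w*r)) : int), ((w*(4*k-2)*q3 - q3) : int); rewrite HM.
  by apply: (@lc _ _ (-4*w*q3) _ HE); ring.
- exists ((w*s) : int), ((-(w*r)) : int), ((-(w*r)) : int), ((-(w*s)) : int), ((w*(4*k-2)*q4 - q4) : int); rewrite HM.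
  by apply: (@lc _ _ (-4*w*q4) _ HE); ring.
- by exists (1 : int), (0 : int), ((-2*r) : int), ((-2*s) : int), (0 : int); ring.
- by exists (0 : int), (1 : int), ((-2*s) : int), ((2*r) : int), (0 : int); ring.
- by exists (0 : int), ((-1) : int), ((-2*s) : int), ((2*r) : int), (0 : int); ring.
- by exists (1 : int), (0 : int), ((2*r) : int), ((2*s) : int), (0 : int); ring.
Qed.
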